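(* Let $T$ be a tree such that the longest $2$-path in $T$ has length $d\ge1$, and let $k$ be a positive integer. Then there exists $L>0$ (depending only on $k$ and $d$) such that the following holds: if $T$ contains a $\mathrm{C}$-gadget of order $d$ and length $L$, then there exists $1\le d'\le d$ such that $T$ contains a closed strong $\mathrm{C}$-gadget of order $d'$ with at least $k$ junctions.
   Context: In a tree $T$: a $2$-path of length $a$ is a path $x_0,\dots,x_a$ with $\deg(x_0)\ne2$, $\deg(x_1)=\dots=\deg(x_{a-1})=2$, $\deg(x_a)\ne 2$. A source is a vertex of degree $>2$. A ray of length $a$ is a $2$-path $x_0,\dots,x_a$ with $\deg(x_0)>2$, $\deg(x_a)=1$; $x_0$ is its source. For a source $s$, let $\deg_{\mathcal{L}}^a(s)$ be the number of rays of length $a$ with source $s$ and $\deg_{\overline{\mathcal{L}}}(s)=\deg(s)-\sum_a\deg_{\mathcal{L}}^a(s)$; $s$ is a fork if $\deg_{\overline{\mathcal{L}}}(s)=1$ and there are positive integers $a,b$ with either $a\ne b$ and $\deg^a_{\mathcal{L}}(s),\deg^b_{\mathcal{L}}(s)>0$, or $a=b$ and $\deg^a_{\mathcal{L}}(s)>1$. A $\mathrm{C}$-gadget of order $d$ and length $k$ is a path $x_0,\dots,x_k$ such that each inner vertex $x_i$ either has degree $2$ or is a source such that every neighbour of $x_i$ other than $x_{i-1},x_{i+1}$ is contained in a ray of length at most $d$ from $x_i$ to a leaf. A $\mathrm{C}$-gadget $x_0,\dots,x_L$ of order $d$ is a strong $\mathrm{C}$-gadget with $k$ junctions if there are integers $0=i_0<i_1<\dots<i_k<i_{k+1}=L$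 with $i_{j+1}-i_j>2d$ for all $j\in\{0,\dots,k\}$ and, for all $j\in\{1,\dots,k\}$, $x_{i_j}$ is the source of a ray of length $d$ containing neither $x_{i_j-1}$ nor $x_{i_j+1}$; $x_{i_1},\dots,x_{i_k}$ are the junctions. It is closed if neither $x_{i_1}$ nor $x_{i_k}$ is a fork. *)

(* Defs.v *)
From mathcomp Require Import all_boot.
Set Implicit Arguments. Unset Strict Implicit. Unset Printing Implicit Defensive.

Section Trees.
Variables (V : finType) (e : rel V).

Definition deg (x : V) : nat := #|[set y | e x y]|.

Definition gpath (x : nat -> V) (n : nat) : bool :=
  [forall i : 'I_n, e (x i) (x i.+1)] &&
  [forall i : 'I_n.+1, forall j : 'I_n.+1, (x i == x j) ==> (i == j :> nat)].

Definition is_tree : Prop :=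
  symmetric e /\ irreflexive e /\ (forall x y, connect e x y) /\
  (forall (x : nat -> V) (n : nat), 2 <= n -> gpath x n -> ~~ e (x n) (x 0)).

Definition two_path (x : nat -> V) (a : nat) : bool :=
  [&& gpath x a, 0 < a, deg (x 0) != 2, deg (x a) != 2 &
      [forall i : 'I_a, (0 < i) ==> (deg (x i) == 2)]].

Definition is_source (s : V) : bool := 2 < deg s.

Definition is_ray (x : nat -> V) (a : nat) : bool :=
  [&& two_path x a, is_source (x 0) & deg (x a) == 1].

Definition tfun n (t : n.+1.-tuple V) : nat -> V := fun i => nth (thead t) t i.

(* number of rays of length a with source s (rays are (a+1)-tuples of vertices) *)
Definition degL (s : V) (a : nat) : nat :=
  #|[set t : (a.+1).-tuple V | is_ray (tfun t) a && (tfun t 0 == s)]|.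

(* rays have length < #|V| (they consist of distinct vertices) *)
Definition degLbar (s : V) : nat := deg s - \sum_(a < #|V|) degL s a.

Definition is_fork (s : V) : Prop :=
  is_source s /\ degLbar s = 1 /\
  exists a b, 0 < a /\ 0 < b /\
    ((a <> b /\ 0 < degL s a /\ 0 < degL s b) \/ (a = b /\ 1 < degL s a)).

Definition longest_2path (d : nat) : Prop :=
  (exists x, two_path x d) /\ (forall x a, two_path x a -> a <= d).

Definition c_gadget (d : nat) (x : nat -> V) (k : nat) : Prop :=
  gpath x k /\
  forall i, 0 < i -> i < k ->
    deg (x i) = 2 \/
    (is_source (x i) /\
     forall y, e (x i) y -> y <> x i.-1 -> y <> x i.+1 ->
       exists (r : nat -> V) (a : nat),
         a <= d /\ is_ray r a /\ r 0 = x i /\ exists m, m <= a /\ r m = y).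

(* x 0, ..., x L is a strong C-gadget of order d with k junctions, witnessed by
   indices idx 0 = 0 < idx 1 < ... < idx k < idx (k+1) = L *)
Definition strong_c_gadget (d : nat) (x : nat -> V) (L k : nat) (idx : nat -> nat) : Prop :=
  c_gadget d x L /\ idx 0 = 0 /\ idx k.+1 = L /\
  (forall j, j <= k -> idx j < idx j.+1 /\ 2 * d < idx j.+1 - idx j) /\
  (forall j, 1 <= j -> j <= k ->
     exists r : nat -> V, is_ray r d /\ r 0 = x (idx j) /\
       forall m, m <= d -> r m <> x (idx j).-1 /\ r m <> x (idx j).+1).

Definition closed_strong_c_gadget (d : nat) (x : nat -> V) (L k : nat) (idx : nat -> nat) : Prop :=
  strong_c_gadget d x L k idx /\ ~ is_fork (x (idx 1)) /\ ~ is_fork (x (idx k)).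

End Trees.

(* Main.v *)
Require Import Defs.
From mathcomp Require Import all_boot zify.
From Stdlib Require Import Classical.
Set Implicit Arguments. Unset Strict Implicit. Unset Printing Implicit Defensive.

Section Basics.
Variables (V : finType) (e : rel V).
Hypothesis esym : symmetric e.
Hypothesis eirr : irreflexive e.
Hypothesis eacyc : forall (x : nat -> V) n, 2 <= n -> gpath e x n -> ~~ e (x n) (x 0).

Lemma gpath_edge x n i : gpath e x n -> i < n -> e (x i) (x i.+1).
Proof. by case/andP => /forallP H _ lt; exact: (H (Ordinal lt)). Qed.

Lemma gpath_inj x n i j : gpath e x n -> i <= n -> j <= n -> x i = x j -> i = j.
Proof.
case/andP => _ /forallP H hi hj eq.
have hi' : i < n.+1 by rewrite ltnS.
have hj' : j < n.+1 by rewrite ltnS.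
move: (H (Ordinal hi')) => /forallP /(_ (Ordinal hj')) /implyP /=.
by rewrite eq eqxx => /(_ isT) /eqP.
Qed.

Lemma gpathP x n : (forall i, i < n -> e (x i) (x i.+1)) ->
  (forall i j, i <= n -> j <= n -> x i = x j -> i = j) -> gpath e x n.
Proof.
move=> H1 H2; apply/andP; split; apply/forallP => i; first exact: H1.
apply/forallP => j; apply/implyP => /eqP h; apply/eqP.
by apply: H2 => //; rewrite -ltnS.
Qed.

Lemma gpath_sub x n p q : gpath e x n -> p <= q -> q <= n ->
  gpath e (fun i => x (p + i)) (q - p).
Proof.
move=> g pq qn; apply: gpathP => [i hi|i j hi hj h].
  rewrite addnS; apply: (gpath_edge g); lia.
have := gpath_inj g _ _ h; lia.
Qed.

Lemma gpath_prefix x n m : gpath e x n -> m <= n -> gpath e x m.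
Proof.
move=> g mn; apply: gpathP => [i hi|i j hi hj h].
  apply: (gpath_edge g); lia.
have := gpath_inj g _ _ h; lia.
Qed.

Lemma gpath_rev x n : gpath e x n -> gpath e (fun i => x (n - i)) n.
Proof.
move=> g; apply: gpathP => [i hi|i j hi hj h].
  rewrite esym; have -> : n - i = (n - i.+1).+1 by lia.
  apply: (gpath_edge g); lia.
have := gpath_inj g _ _ h; lia.
Qed.

Lemma first_step r a y m : gpath e r a -> e (r 0) y -> m <= a -> r m = y -> m = 1.
Proof.
move=> g ey ma rm.
case: m ma rm => [|[|m]] ma rm //.
  by move: ey; rewrite -rm eirr.
have := eacyc (isT : 1 < m.+2) (gpath_prefix g ma).
by rewrite rm esym ey.
Qed.

Lemma nb_set v y : e v y -> y \in [set y | e v y].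
Proof. by rewrite inE. Qed.

Lemma deg2_other v u : deg e v = 2 -> e v u -> exists w, e v w /\ w <> u.
Proof.
move=> d2 evu; rewrite /deg in d2.
move: d2; rewrite (cardsD1 u) inE evu add1n => [[]] /eqP /cards1P [w hw].
exists w; have : w \in [set y | e v y] :\ u by rewrite hw set11.
by rewrite !inE => /andP [/eqP ne ->].
Qed.

Lemma deg2_unique v u w z : deg e v = 2 -> e v u -> e v w -> e v z ->
  u <> w -> z <> u -> z = w.
Proof.
move=> d2 evu evw evz nuw nzu; rewrite /deg in d2.
move: d2; rewrite (cardsD1 u) inE evu add1n => [[]] /eqP /cards1P [c hc].
have : w \in [set y | e v y] :\ u by rewrite !inE evw andbT; apply/eqP => h; apply: nuw.
have : z \in [set y | e v y] :\ u by rewrite !inE evz andbT; apply/eqP.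
by rewrite hc !inE => /eqP -> /eqP ->.
Qed.

Lemma deg3_other v u w : 2 < deg e v -> exists y, e v y /\ y <> u /\ y <> w.
Proof.
rewrite /deg => h.
have : 0 < #|[set y | e v y] :\ u :\ w|.
  have := cardsD1 u [set y | e v y]; have := cardsD1 w ([set y | e v y] :\ u).
  move: (u \in _) (w \in _) => [] [] /=; lia.
case/card_gt0P => y; rewrite !inE => /and3P [/eqP h1 /eqP h2 h3].
by exists y.
Qed.

Lemma gpath_card x n : gpath e x n -> n < #|V|.
Proof.
move=> g.
have hinj : injective (fun i : 'I_n.+1 => x i).
  by move=> i j h; apply: ord_inj; apply: (gpath_inj g _ _ h); rewrite -ltnS ltn_ord.
have := leq_card _ hinj; by rewrite card_ord.
Qed.

End Basics.

Section Rays.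
Variables (V : finType) (e : rel V).
Hypothesis esy : symmetric e.
Hypothesis eirr : irreflexive e.
Hypothesis eacyc : forall (x : nat -> V) n, 2 <= n -> gpath e x n -> ~~ e (x n) (x 0).

Lemma rayP r a : is_ray e r a -> [/\ gpath e r a, 0 < a, 2 < deg e (r 0),
  deg e (r a) = 1 & forall j, 0 < j -> j < a -> deg e (r j) = 2].
Proof.
case/and3P => /and5P [g a0 d0 da /forallP H] src /eqP d1; split => // j j0 ja.
by move: (H (Ordinal ja)) => /implyP /(_ j0) /eqP.
Qed.

Lemma follow y ny z nz m : gpath e y ny -> gpath e z nz -> y 0 = z 0 -> y 1 = z 1 ->
  m <= ny -> m <= nz -> (forall j, 0 < j -> j < m -> deg e (y j) = 2) ->
  forall j, j <= m -> y j = z j.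
Proof.
move=> gy gz h0 h1 my mz hd.
suff H : forall j, j <= m -> y j = z j /\ (j.+1 <= m -> y j.+1 = z j.+1).
  by move=> j /H [].
elim => [|j IH] jm; first by split.
have [_ IH2] := IH (ltnW jm); have e1 := IH2 jm; split => // j2m.
have d2 : deg e (y j.+1) = 2 by apply: hd; lia.
have ej : e (y j.+1) (y j) by rewrite esy; apply: (gpath_edge gy); lia.
have ej2 : e (y j.+1) (y j.+2) by apply: (gpath_edge gy); lia.
have ez2 : e (y j.+1) (z j.+2) by rewrite e1; apply: (gpath_edge gz); lia.
have ejz : y j = z j by have [] := IH (ltnW jm).
symmetry; apply: (deg2_unique d2 ej ej2 ez2).
  by move=> h; have := gpath_inj gy _ _ h; lia.
by rewrite ejz => h; have := gpath_inj gz _ _ h; lia.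
Qed.

Lemma ray_len_uniq r a r' b : is_ray e r a -> is_ray e r' b -> r 0 = r' 0 -> r 1 = r' 1 ->
  a <= b.
Proof.
move=> /rayP [g a0 _ da da2] /rayP [g' b0 _ db db2] h0 h1.
rewrite leqNgt; apply/negP => ba.
have := follow g' g (esym h0) (esym h1) (leqnn b) (ltnW ba) db2 (leqnn b) => rb.
by move: db; rewrite rb da2 //.
Qed.

Lemma ray_uniq r a r' b : is_ray e r a -> is_ray e r' b -> r 0 = r' 0 -> r 1 = r' 1 ->
  a = b /\ forall j, j <= a -> r j = r' j.
Proof.
move=> ra rb h0 h1.
have ab : a = b by apply/eqP; rewrite eqn_leq (ray_len_uniq ra rb) ?(ray_len_uniq rb ra).
subst b; split => //.
move: ra rb => /rayP [g a0 _ da da2] /rayP [g' _ _ _ _].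
exact: (follow g g' h0 h1 (leqnn a) (leqnn a) da2).
Qed.

Lemma ray_through y n m r a : gpath e y n -> 1 <= m -> m <= n ->
  deg e (y m) != 2 -> deg e (y m) != 1 ->
  (forall j, 0 < j -> j < m -> deg e (y j) = 2) ->
  is_ray e r a -> r 0 = y 0 -> r 1 <> y 1.
Proof.
move=> gy m1 mn dm2 dm1 hd ra h0 h1.
move: ra => /rayP [g a0 _ da da2].
case: (ltnP a m) => am.
  have := follow gy g (esym h0) (esym h1) (ltnW (leq_trans am mn)) (leqnn a)
     (fun j j0 ja => hd j j0 (ltn_trans ja am)) (leqnn a) => ya.
  by move: da; rewrite -ya hd.
have := follow gy g (esym h0) (esym h1) mn am hd (leqnn m) => ym.
move: am; rewrite leq_eqVlt => /orP [/eqP am|am].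
  by subst a; move: dm1; rewrite ym da.
by move: dm2; rewrite ym da2 //; lia.
Qed.

Lemma extend_front y n : gpath e y n -> 0 < n -> deg e (y 0) = 2 ->
  (forall j, 0 < j -> j < n -> deg e (y j) = 2) ->
  exists y', gpath e y' n.+1 /\ forall j, 0 < j -> j < n.+1 -> deg e (y' j) = 2.
Proof.
move=> g n0 d0 hd.
have e01 : e (y 0) (y 1) by apply: (gpath_edge g).
have [z [ez nz]] := deg2_other d0 e01.
exists (fun j => if j is j'.+1 then y j' else z); split.
  apply: gpathP => [[|i] hi|[|i] [|j] hi hj h] //=.
  - by rewrite esy.
  - by apply: (gpath_edge g).
  - have j1 := first_step esy eirr eacyc (m:=j) g ez ltac:(lia) (esym h).
    by subst j; case: nz.
  - have j1 := first_step esy eirr eacyc (m:=i) g ez ltac:(lia) h.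
    by subst i; case: nz.
  - by have := gpath_inj g _ _ h; lia.
by move=> [|[|j]] //= j0 jn; apply: hd.
Qed.

Lemma two_pathI y n : gpath e y n -> 0 < n -> deg e (y 0) != 2 -> deg e (y n) != 2 ->
  (forall j, 0 < j -> j < n -> deg e (y j) = 2) -> two_path e y n.
Proof.
move=> g n0 d0 dn hd; apply/and5P; split => //; apply/forallP => i; apply/implyP => i0.
by rewrite hd.
Qed.

Lemma long_two_path K y n : #|V| - n <= K -> gpath e y n -> 0 < n ->
  (forall j, 0 < j -> j < n -> deg e (y j) = 2) ->
  exists z b, two_path e z b /\ n <= b.
Proof.
elim: K y n => [|K IH] y n hK g n0 hd.
  by have := gpath_card g; lia.
have nV := gpath_card g.
case: (boolP (deg e (y 0) == 2)) => [/eqP d0|d0].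
  have [y' [g' hd']] := extend_front g n0 d0 hd.
  have [z [b [tp nb]]] := IH y' n.+1 ltac:(lia) g' isT hd'.
  by exists z, b; split => //; lia.
case: (boolP (deg e (y n) == 2)) => [/eqP dn|dn]; last first.
  by exists y, n; split => //; apply: two_pathI.
have gr := gpath_rev esy g.
have [y' [g' hd']] := extend_front gr n0 ltac:(by rewrite /= subn0) 
   (fun j j0 jn => hd (n - j) ltac:(lia) ltac:(lia)).
have [z [b [tp nb]]] := IH y' n.+1 ltac:(lia) g' isT hd'.
by exists z, b; split => //; lia.
Qed.

Lemma lemmaA d (hd2 : forall x a, two_path e x a -> a <= d) y n : gpath e y n -> 0 < n ->
  (forall j, 0 < j -> j < n -> deg e (y j) = 2) -> n <= d.
Proof.
move=> g n0 hd.
have [z [b [tp nb]]] := long_two_path (leqnn _) g n0 hd.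
have := hd2 _ _ tp; lia.
Qed.

End Rays.

Lemma sum_card_disj (T : finType) (F : nat -> {set T}) K :
  (forall a b, a != b -> [disjoint F a & F b]) ->
  \sum_(a < K) #|F a| = #|\bigcup_(a < K) F a|.
Proof.
move=> dj; elim: K => [|K IH]; first by rewrite !big_ord0 cards0.
rewrite !big_ord_recr /= IH.
have : [disjoint \bigcup_(a < K) F a & F K].
  rewrite disjoint_sym; apply: bigcup_disjoint => i _; apply: dj.
  by rewrite neq_ltn ltn_ord orbT.
rewrite -(leq_card_setU (\bigcup_(a < K) F a) (F K)).2 => /eqP.
by move=> ->.
Qed.

Lemma tuple_eq_tfun (T : finType) n (t t' : n.+1.-tuple T) :
  (forall j, j <= n -> tfun t j = tfun t' j) -> t = t'.
Proof.
move=> H; apply: val_inj => /=; apply: (@eq_from_nth _ (thead t)).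
  by rewrite !size_tuple.
move=> i; rewrite size_tuple ltnS => hi.
have := H i hi; rewrite /tfun => ->.
by apply: set_nth_default; rewrite size_tuple ltnS.
Qed.

Definition IP (V : finType) (e : rel V) (t : nat) (v u w : V) : Prop :=
  deg e v = 2 \/ (is_source e v /\ forall y, e v y -> y <> u -> y <> w ->
     exists (r : nat -> V) (a : nat), a <= t /\ is_ray e r a /\ r 0 = v /\
        exists m, m <= a /\ r m = y).

Section Gadget.
Variables (V : finType) (e : rel V).
Hypothesis esy : symmetric e.
Hypothesis eirr : irreflexive e.
Hypothesis eacyc : forall (x : nat -> V) n, 2 <= n -> gpath e x n -> ~~ e (x n) (x 0).
Variable d : nat.
Hypothesis hd2 : forall x a, two_path e x a -> a <= d.
Variables (x : nat -> V) (L : nat).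
Hypothesis gx : gpath e x L.

Definition lev t i := IP e t (x i) (x i.-1) (x i.+1).

Lemma nb_prev i : 0 < i -> i <= L -> e (x i) (x i.-1).
Proof.
move=> i0 iL; rewrite esy; have := gpath_edge gx (i:=i.-1); rewrite prednK //.
by apply; lia.
Qed.

Lemma nb_next i : i < L -> e (x i) (x i.+1).
Proof. exact: gpath_edge gx. Qed.

Lemma lev0 i : 0 < i -> i < L -> lev 0 i -> deg e (x i) = 2.
Proof.
move=> i0 iL [//|[src H]].
have [y [ey [n1 n2]]] := deg3_other (x i.-1) (x i.+1) src.
have [r [a [a0 [ra [r0 [m [ma rm]]]]]]] := H y ey n1 n2.
have m0 : m = 0 by lia.
have a00 : a = 0 by lia.
by move: ey; rewrite -rm m0 r0 eirr.
Qed.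

Lemma junction_ray t i : 0 < i -> i < L -> lev t.+1 i -> ~ lev t i ->
  exists r : nat -> V, is_ray e r t.+1 /\ r 0 = x i /\
    forall m, m <= t.+1 -> r m <> x i.-1 /\ r m <> x i.+1.
Proof.
move=> i0 iL [d2|[src H]] nl; first by case: nl; left.
have : ~ (forall y, e (x i) y -> y <> x i.-1 -> y <> x i.+1 ->
     exists (r : nat -> V) (a : nat), a <= t /\ is_ray e r a /\ r 0 = x i /\
        exists m, m <= a /\ r m = y).
  by move=> H'; apply: nl; right.
move=> /not_all_ex_not [y Hy].
have [ey Hy2] := imply_to_and _ _ Hy.
have [n1 Hy3] := imply_to_and _ _ Hy2.
have [n2 nr] := imply_to_and _ _ Hy3.
have [r [a [at1 [ra [r0 [m [ma rm]]]]]]] := H y ey n1 n2.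
have at' : a = t.+1.
  apply/eqP; rewrite eqn_leq at1 /=; rewrite ltnNge; apply/negP => at0.
  by apply: nr; exists r, a; split => //; split => //; split => //; exists m.
subst a; exists r; split => //; split => //.
have [g _ _ _ _] := rayP ra.
have m1 : m = 1 by apply: (first_step esy eirr eacyc g (y:=y) _ ma rm); rewrite r0.
subst m.
move=> m' hm'; split => h.
  case: m' hm' h => [|m'] hm' h.
    by move: h; rewrite r0 => /(gpath_inj gx) => /(_ ltac:(lia) ltac:(lia)); lia.
  have := first_step esy eirr eacyc g (y:=x i.-1) ltac:(rewrite r0; apply: nb_prev; lia) hm' h.
  by move=> [] m0; subst m'; apply: n1; rewrite -rm.
case: m' hm' h => [|m'] hm' h.
  by move: h; rewrite r0 => /(gpath_inj gx) => /(_ ltac:(lia) ltac:(lia)); lia.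
have := first_step esy eirr eacyc g (y:=x i.+1) ltac:(rewrite r0; apply: nb_next; lia) hm' h.
by move=> [] m0; subst m'; apply: n2; rewrite -rm.
Qed.


Lemma no_through y n : gpath e y n -> d < n ->
  (forall j, 0 < j -> j <= d -> deg e (y j) = 2 \/ 2 < deg e (y j)) ->
  forall r a, is_ray e r a -> r 0 = y 0 -> r 1 <> y 1.
Proof.
move=> g dn hy r a ra r0.
have ex : exists j, (0 < j) && (deg e (y j) != 2) && (j <= d).
  apply: NNPP => nex.
  have := lemmaA esy eirr eacyc hd2 (gpath_prefix g dn) isT.
  have H : forall j, 0 < j -> j < d.+1 -> deg e (y j) = 2.
    move=> j j0 jd; apply/eqP; apply: contraT => hj; case: nex; exists j.
    by rewrite j0 hj /=; lia.
  by move=> /(_ H); lia.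
have ex' : exists j, (0 < j) && (deg e (y j) != 2).
  by case: ex => j /andP [h _]; exists j.
pose m := ex_minn ex'.
have [hm hmin] : ((0 < m) && (deg e (y m) != 2)) /\ forall j, (0 < j) && (deg e (y j) != 2) -> m <= j.
  by rewrite /m; case: ex_minnP.
case/andP: hm => m0 dm.
have md : m <= d by case: ex => j /andP [/hmin hj jd]; lia.
have dm3 : 2 < deg e (y m) by case: (hy m m0 md) => // h; move: dm; rewrite h.
apply: (ray_through esy g m0 (leq_trans md (ltnW dn)) dm _ _ ra r0).
  by apply/eqP => h; move: dm3; rewrite h.
move=> j j0 jm; apply/eqP; apply: contraT => hj.
by have := hmin j; rewrite j0 hj => /(_ isT); lia.
Qed.

Lemma no_fork i : (forall j, 0 < j -> j < L -> lev d j) -> d < i -> i + d < L ->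
  ~ is_fork e (x i).
Proof.
move=> hg di idL [_ [hbar _]].
have i0 : 0 < i by lia.
set s := x i.
have fwd : forall r a, is_ray e r a -> r 0 = s -> r 1 <> x i.+1.
  move=> r a ra r0.
  have g := gpath_sub gx (p:=i) (q:=L) ltac:(lia) (leqnn L).
  have := no_through g ltac:(lia) _ ra; rewrite addn0 addn1; apply => // j j0 jd.
  by case: (hg (i + j) ltac:(lia) ltac:(lia)) => [->|[h _]]; [left|right].
have bwd : forall r a, is_ray e r a -> r 0 = s -> r 1 <> x i.-1.
  move=> r a ra r0.
  have g := gpath_rev esy (gpath_prefix gx (m:=i) ltac:(lia)).
  have := no_through g ltac:(lia) _ ra; rewrite subn0 subn1; apply => // j j0 jd.
  by case: (hg (i - j) ltac:(lia) ltac:(lia)) => [->|[h _]]; [left|right].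
pose S a := [set t : (a.+1).-tuple V | is_ray e (tfun t) a && (tfun t 0 == s)].
pose F a := [set tfun t 1 | t in S a].
pose W := [set y | e s y] :\ x i.-1 :\ x i.+1.
have np : x i.-1 != x i.+1 by apply/eqP => /(gpath_inj gx) => /(_ ltac:(lia) ltac:(lia)); lia.
have cW : #|W| = deg e s - 2.
  rewrite /deg (cardsD1 (x i.-1) [set y | e s y]) (cardsD1 (x i.+1) ([set y | e s y] :\ x i.-1)).
  rewrite !inE nb_prev ?nb_next //; try lia.
  by rewrite eq_sym np /W /=; lia.
have cF : forall a, #|F a| = degL e s a.
  move=> a; rewrite /F card_in_imset // => t t'; rewrite !inE => /andP [ra /eqP r0] /andP [ra' /eqP r0'] h1.
  have [_ h] := ray_uniq esy ra ra' (etrans r0 (esym r0')) h1.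
  exact: tuple_eq_tfun.
have dj : forall a b, a != b -> [disjoint F a & F b].
  move=> a b ab; rewrite -setI_eq0; apply/eqP/setP => z; rewrite !inE.
  apply/negP => /andP [/imsetP [t]]; rewrite inE => /andP [ra /eqP r0] -> /imsetP [t'].
  rewrite inE => /andP [ra' /eqP r0'] h1.
  have [hab _] := ray_uniq esy ra ra' (etrans r0 (esym r0')) h1.
  by move: ab; rewrite hab eqxx.
have sub : \bigcup_(a < #|V|) F a \subset W.
  apply/bigcupsP => a _; apply/subsetP => z /imsetP [t]; rewrite inE => /andP [ra /eqP r0] ->.
  have [g a0 _ _ _] := rayP ra.
  rewrite !inE; apply/and3P; split.
  - by apply/eqP; apply: fwd ra r0.
  - by apply/eqP; apply: bwd ra r0.
  - by rewrite -r0; apply: (gpath_edge g).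
have := subset_leq_card sub; rewrite -sum_card_disj // cW.
move: hbar; rewrite /degLbar -/s.
have -> : \sum_(a < #|V|) degL e s a = \sum_(a < #|V|) #|F a|.
  by apply: eq_bigr => a _; rewrite cF.
have : 1 < deg e s.
  have := cardsD1 (x i.-1) [set y | e s y]; have := cardsD1 (x i.+1) ([set y | e s y] :\ x i.-1).
  rewrite !inE nb_prev ?nb_next //; try lia.
  rewrite eq_sym np /deg /=; lia.
lia.
Qed.

End Gadget.

Fixpoint NN (d k t : nat) : nat :=
  if t is t'.+1 then k.+1 * (2 * d + 1 + NN d k t') else d.+1.

Lemma mono_le (f : nat -> nat) K : (forall l, l < K -> f l <= f l.+1) ->
  forall a b, a <= b -> b <= K -> f a <= f b.
Proof.
move=> H a b; elim: b => [|b IHb] ab bK; first by have -> : a = 0 by lia.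
case: (eqVneq a b.+1) => [->//|ne].
have := H b bK; have := IHb ltac:(lia) ltac:(lia); lia.
Qed.

Section Comb.
Variables (V : finType) (e : rel V).
Hypothesis esy : symmetric e.
Hypothesis eirr : irreflexive e.
Hypothesis eacyc : forall (x : nat -> V) n, 2 <= n -> gpath e x n -> ~~ e (x n) (x 0).
Variable d : nat.
Hypothesis hd2 : forall x a, two_path e x a -> a <= d.
Variables (x : nat -> V) (L : nat).
Hypothesis gx : gpath e x L.
Variable k : nat.
Hypothesis hk : 0 < k.
Hypothesis hg : forall j, 0 < j -> j < L -> lev e x d j.

Definition Goal := exists d' : nat, 1 <= d' /\ d' <= d /\
        exists (x : nat -> V) (L' k' : nat) (idx : nat -> nat),
          k <= k' /\ closed_strong_c_gadget e d' x L' k' idx.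

Lemma mainS t : t <= d -> forall p n, p + n <= L -> NN d k t <= n ->
  (forall i, p < i -> i < p + n -> lev e x t i) -> Goal.
Proof.
elim: t => [|t IH] td p n pnL Nn hl.
  have g := gpath_sub gx (p:=p) (q:=p+n) (leq_addr _ _) pnL; rewrite addKn in g.
  have := lemmaA esy eirr eacyc hd2 g ltac:(simpl in Nn; lia).
  have : forall j, 0 < j -> j < n -> deg e (x (p + j)) = 2.
    by move=> j j0 jn; apply: (lev0 eirr gx) ; [lia|lia|apply: hl; lia].
  move=> H /(_ H); simpl in Nn; lia.
simpl in Nn; set G := 2 * d + 1 in Nn; set M := NN d k t in Nn.
have hG : G = 2 * d + 1 by [].
case: (classic (exists q, p <= q /\ q + M <= p + n /\
        forall i, q < i -> i < q + M -> lev e x t i)) => [[q [pq [qM hq]]]|nH].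
  by apply: (IH (ltnW td) q M) => //; lia.
have H : forall q, p <= q -> q + M <= p + n -> exists i, q < i /\ i < q + M /\ ~ lev e x t i.
  move=> q pq qM; apply: NNPP => nex; apply: nH; exists q; split => //; split => //.
  move=> i qi iq; apply: NNPP => nl; apply: nex; by exists i.
have J : forall j, j <= k -> exists idx : nat -> nat, idx 0 = p /\
   (forall l, l < j -> idx l + G < idx l.+1 /\ idx l.+1 <= idx l + G + M) /\
   (forall l, 0 < l -> l <= j -> ~ lev e x t (idx l)) /\
   (forall l, l <= j -> p + l <= idx l /\ idx l <= p + l * (G + M)).
  elim => [|j IHj] jk.
    exists (fun _ => p); split => //; split => //; split => [l l0 l0'|l l0]; first lia.
    have -> : l = 0 by lia.
    by rewrite mul0n addn0.
  have [idx [i0 [igap [inl ib]]]] := IHj (ltnW jk).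
  have [ib1 ib2] := ib j (leqnn j).
  have hm := leq_mul jk (leqnn (G + M)); rewrite !mulSn in hm.
  have [i [qi [iq nli]]] := H (idx j + G) ltac:(lia) ltac:(lia).
  exists (fun l => if l == j.+1 then i else idx l); split => //; split; [|split].
  - move=> l lj; rewrite eqSS; case: (eqVneq l j) => [->|ne].
      have -> : (j == j.+1) = false by apply/eqP; lia.
    by rewrite /=; lia.
    have lj' : l < j by lia.
    have -> : (l == j.+1) = false by apply/eqP; lia.
    exact: igap.
  - move=> l l0 lj; case: (eqVneq l j.+1) => [e1|ne] //.
    by apply: inl => //; lia.
  - move=> l lj; case: (eqVneq l j.+1) => [e1|ne].
      subst l.
      by rewrite mulSn; lia.
    by apply: ib; lia.
have [idx [i0 [igap [inl ib]]]] := J k (leqnn k).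
rewrite mulSn in Nn.
have ibk := ib k (leqnn k).
have idx_in : forall l, 0 < l -> l <= k -> p < idx l /\ idx l < p + n.
  move=> l l0 lk; have [b1 b2] := ib l lk.
  have := leq_mul lk (leqnn (G + M)); lia.
exists t.+1; split => //; split => //.
exists (fun i => x (p + i)), n, k, (fun l => if l == k.+1 then n else idx l - p).
split => //.
have nk : forall l, l <= k -> (l == k.+1) = false by move=> l lk; apply/eqP; lia.
have xid : forall l, 0 < l -> l <= k -> x (p + (idx l - p)) = x (idx l).
  by move=> l l0 lk; rewrite subnKC //; have := idx_in l l0 lk; lia.
split; [split; [|split; [|split; [|split]]]|split].
- split.
    have g := gpath_sub gx (p:=p) (q:=p+n) (leq_addr _ _) pnL; by rewrite addKn in g.
  move=> i ip iN.
  have := hl (p + i) ltac:(lia) ltac:(lia); rewrite /lev.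
  have -> : (p + i).-1 = p + i.-1 by lia.
  by rewrite addnS.
- by rewrite nk // i0 subnn.
- by rewrite eqxx.
- move=> j jk; rewrite nk //; case: (eqVneq j k) => [->|ne].
    rewrite eqxx; split; lia.
  rewrite nk; last by lia.
  have := igap j ltac:(lia); have := idx_in j.+1 isT ltac:(lia).
  case: j jk ne => [|j] jk ne; first by rewrite i0 subnn; lia.
  have := idx_in j.+1 isT ltac:(lia); lia.
- move=> j j1 jk; rewrite nk // xid //.
  have [ip iN] := idx_in j j1 jk.
  have [r [ra [r0 hr]]] := junction_ray esy eirr eacyc gx (i:=idx j) (t:=t) ltac:(lia) ltac:(lia)
     (hl _ ip iN) (inl j j1 jk).
  exists r; split => //; split => //.
  have -> : p + (idx j - p).-1 = (idx j).-1 by lia.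
  have -> : p + (idx j - p).+1 = (idx j).+1 by lia.
  exact: hr.
- rewrite nk // xid //.
  have [ip iN] := idx_in 1 isT hk.
  have := igap 0 hk; rewrite i0 => ig0; have := ib 1 hk => ib1.
  have := leq_mul hk (leqnn (G + M)) => hk2.
  apply: (no_fork esy eirr eacyc hd2 gx hg); lia.
- rewrite nk // xid //.
  have [ip iN] := idx_in k hk (leqnn k).
  have := igap 0 hk; rewrite i0 => ig0.
  have ik : idx 1 <= idx k.
    have : forall l, l < k -> idx l <= idx l.+1 by move=> l lk; have := igap l lk; lia.
    by move=> mono; apply: (mono_le mono).
  apply: (no_fork esy eirr eacyc hd2 gx hg); lia.
Qed.

End Comb.

Theorem corollary35 :
  forall d k : nat, 1 <= d -> 0 < k ->
  exists L : nat, 0 < L /\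
    forall (V : finType) (e : rel V),
      is_tree e -> longest_2path e d ->
      (exists x : nat -> V, c_gadget e d x L) ->
      exists d' : nat, 1 <= d' /\ d' <= d /\
        exists (x : nat -> V) (L' k' : nat) (idx : nat -> nat),
          k <= k' /\ closed_strong_c_gadget e d' x L' k' idx.
Proof.
move=> d k d1 k0; exists (NN d k d); split.
  by case: d {d1} => [|t] //=; rewrite muln_gt0; lia.
move=> V e [esy [eirr [_ eacyc]]] [_ hd2] [x [gx hg]].
apply: (mainS esy eirr eacyc hd2 gx k0 hg (leqnn d) (p:=0) (n:=NN d k d)) => // i i0 iL.
Qed.
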